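(* Let $\mathcal A$ be a distributed algorithm, and for $n\ge 3$ let $t(C_n)$ denote its run-time on the $n$-vertex cycle graph $C_n$. If the sequence $t(C_3),t(C_4),\dots$ is unbounded, then $t(C_n)=\Omega(n)$.
   Context: Let $S$ be a (possibly infinite) set of states. An algorithm $\mathcal A$ on a graph $G=(V,E)$ with initial state assignment $\varphi:V\to S$ is modeled as follows: at step $\tau$ each vertex $v$ knows the states (and structure) of its radius-$\tau$ neighborhood $N(v,\tau)$, and halts or continues according to the value of a fixed function $f$ from state-labeled (rooted) graphs to $\{\textsc{halt},\textsc{continue}\}$ applied to $N(v,\tau)$; no other information (e.g. identifiers beyond the states, or the size of the graph) is available. $\mathcal A$ halts in time $t$ on input $(G,\varphi)$ if every vertex halts at some time $\tau\le t$ and some vertex halts exactly at time $t$. The run-time $t(G)$ of $\mathcal A$ on $G$ is the maximum over all initial state assignments $\varphi$ of the halting time on $(G,\varphi)$. *)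

(* Defs.v *)
From mathcomp Require Import all_boot.
Set Implicit Arguments. Unset Strict Implicit. Unset Printing Implicit Defensive.

(* A state-labelled rooted graph with k vertices is represented on the
   canonical vertex type 'I_k : adjacency relation, root, labelling.
   An algorithm is a function [f] from such objects to bool
   (true = HALT, false = CONTINUE) which is invariant under
   isomorphism (relabelling of the vertices), i.e. it really is a
   function of the isomorphism class of the rooted labelled graph. *)
Definition local_rule (S : Type) :=
  forall k : nat, rel 'I_k -> 'I_k -> ('I_k -> S) -> bool.

Definition iso_invariant (S : Type) (f : local_rule S) : Prop :=
  forall (k : nat) (p : 'I_k -> 'I_k), injective p ->
  forall (e : rel 'I_k) (r : 'I_k) (lab : 'I_k -> S),
    f k e (p r) lab = f k (fun i j => e (p i) (p j)) r (fun i => lab (p i)).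

Fixpoint ball (V : finType) (e : rel V) (v : V) (t : nat) : {set V} :=
  match t with
  | 0 => [set v]
  | t'.+1 => ball e v t' :|: [set u | [exists w in ball e v t', e w u]]
  end.

Lemma ball_root (V : finType) (e : rel V) (v : V) (t : nat) : v \in ball e v t.
Proof.
elim: t => [|t IH] /=; first by rewrite in_set1.
by rewrite in_setU IH.
Qed.

(* f applied to the radius-t neighbourhood N(v,t) (the subgraph induced on
   the ball, rooted at v, labelled by phi), transported to 'I_#|ball|
   via the canonical enumeration of the ball.  By [iso_invariant] the
   choice of enumeration is irrelevant. *)
Definition halts_at (S : Type) (f : local_rule S) (V : finType) (e : rel V)
    (phi : V -> S) (v : V) (t : nat) : bool :=
  let B := ball e v t in
  f #|B| (fun i j => e (enum_val i) (enum_val j))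
         (enum_rank_in (ball_root e v t) v)
         (fun i => phi (enum_val i)).

(* The algorithm halts within time t on G (for every initial state
   assignment): i.e. the run-time t(G) is at most t. *)
Definition halts_within (S : Type) (f : local_rule S) (V : finType) (e : rel V)
    (t : nat) : Prop :=
  forall (phi : V -> S) (v : V), exists2 tau, tau <= t & halts_at f e phi v tau.

Definition cycle_adj (n : nat) : rel 'I_n :=
  fun i j => (val j == i.+1 %% n) || (val i == j.+1 %% n).
Arguments cycle_adj n : clear implicits.

(* Main.v *)
Require Import Defs.
From mathcomp Require Import all_boot zify.
From Stdlib Require Import FunctionalExtensionality.
Unset Printing Implicit Defensive.

Section Gen.
Variables (S : Type) (f : local_rule S) (finv : iso_invariant f).

Definition Fgen (V : finType) (e : rel V) (phi : V -> S) k (en : 'I_k -> V) (r : 'I_k) :=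
  f k (fun i j => e (en i) (en j)) r (fun i => phi (en i)).
Arguments Fgen {V} e phi {k} en r.

Lemma halts_atE (V : finType) (e : rel V) phi v t :
  halts_at f e phi v t = Fgen e phi (@enum_val _ (mem (ball e v t))) (enum_rank_in (ball_root e v t) v).
Proof. by []. Qed.

Lemma Fgen_perm (V : finType) (e : rel V) phi k k' (H : k = k') (en : 'I_k -> V) (en' : 'I_k' -> V) r r' :
  injective en -> injective en' -> (forall i, exists j, en j = en' i) -> en r = en' r' ->
  Fgen e phi en r = Fgen e phi en' r'.
Proof.
subst k' => ien ien' ex Er.
pose p i := odflt i [pick j | en j == en' i].
have pE i : en (p i) = en' i.
  rewrite /p; case: pickP => [j /eqP //|H0]; have [j Hj] := ex i.
  by have := H0 j; rewrite Hj eqxx.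
have pinj : injective p by move=> i1 i2 Hp; apply: ien'; rewrite -!pE Hp.
have -> : r = p r' by apply: ien; rewrite pE.
rewrite /Fgen finv //.
have -> : (fun i j => e (en (p i)) (en (p j))) = (fun i j => e (en' i) (en' j)).
  by apply: functional_extensionality => i; apply: functional_extensionality => j; rewrite !pE.
have -> : (fun i => phi (en (p i))) = (fun i => phi (en' i)).
  by apply: functional_extensionality => i; rewrite pE.
by [].
Qed.

Lemma transfer (V1 V2 : finType) (e1 : rel V1) (e2 : rel V2) phi1 phi2 v1 v2 t1 t2
  (g : V1 -> V2) (h : V2 -> V1) :
  (forall x, x \in ball e1 v1 t1 -> g x \in ball e2 v2 t2) ->
  (forall y, y \in ball e2 v2 t2 -> h y \in ball e1 v1 t1) ->
  (forall x, x \in ball e1 v1 t1 -> h (g x) = x) ->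
  (forall y, y \in ball e2 v2 t2 -> g (h y) = y) ->
  (forall x y, x \in ball e1 v1 t1 -> y \in ball e1 v1 t1 -> e2 (g x) (g y) = e1 x y) ->
  (forall x, x \in ball e1 v1 t1 -> phi2 (g x) = phi1 x) -> g v1 = v2 ->
  halts_at f e1 phi1 v1 t1 = halts_at f e2 phi2 v2 t2.
Proof.
move=> gB hB hg gh ge gphi gv.
rewrite !halts_atE.
transitivity (Fgen e2 phi2 (fun i => g (@enum_val _ (mem (ball e1 v1 t1)) i))
                 (enum_rank_in (ball_root e1 v1 t1) v1)).
  rewrite /Fgen; f_equal.
    apply: functional_extensionality => i; apply: functional_extensionality => j.
    by rewrite ge //; apply: enum_valP.
  apply: functional_extensionality => i.
  by rewrite gphi //; apply: enum_valP.
apply: Fgen_perm.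
- have Eim : g @: ball e1 v1 t1 = ball e2 v2 t2.
    apply/eqP; rewrite eqEsubset; apply/andP; split.
      by apply/subsetP => y /imsetP [x Hx ->]; apply: gB.
    by apply/subsetP => y Hy; rewrite -(gh y Hy); apply: imset_f; apply: hB.
  rewrite -Eim card_in_imset //.
  by move=> x y Hx Hy Hxy; rewrite -(hg x Hx) -(hg y Hy) Hxy.
- move=> i j Hij; apply: enum_val_inj.
  by rewrite -(hg _ (enum_valP i)) -(hg _ (enum_valP j)) Hij.
- exact: enum_val_inj.
- move=> i; exists (enum_rank_in (ball_root e1 v1 t1) (h (enum_val i))).
  by rewrite enum_rankK_in ?gh //; [apply: enum_valP | apply: hB; apply: enum_valP].
- by rewrite !enum_rankK_in ?gv // ball_root.
Qed.

Lemma ball_stable (V : finType) (e : rel V) v s :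
  ball e v s.+1 = ball e v s -> forall k, ball e v (s + k) = ball e v s.
Proof.
move=> Hs; elim=> [|k IH]; first by rewrite addn0.
by rewrite addnS /= IH; exact: Hs.
Qed.

Lemma ball_grow (V : finType) (e : rel V) v t :
  (exists s, s <= t /\ ball e v s.+1 = ball e v s) \/ t < #|ball e v t|.
Proof.
elim: t => [|t IHt]; last case: IHt => [[s [Hs E]]|IH].
- by right; rewrite /= cards1.
- by left; exists s; split=> //; apply: leqW.
- have [E|NE] := eqVneq (ball e v t.+1) (ball e v t); first by left; exists t.
  right; apply: (leq_ltn_trans IH).
  apply: proper_card; rewrite properEneq eq_sym NE /=.
  by rewrite /=; apply: subsetUl.
Qed.

Lemma ball_eventually (V : finType) (e : rel V) v tau :
  #|V| <= tau -> ball e v tau = ball e v #|V|.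
Proof.
move=> Ht.
have [[s [Hs E]]|C] := ball_grow _ e v #|V|; last first.
  by have := max_card (mem (ball e v #|V|)); rewrite leqNgt C.
rewrite -(subnKC Ht) -(subnKC Hs) -!addnA !ball_stable //.
Qed.

Lemma small_bound (V : finType) (e : rel V) phi v tau :
  halts_at f e phi v tau -> exists2 tau', tau' <= #|V| & halts_at f e phi v tau'.
Proof.
move=> H; case: (leqP tau #|V|) => Ht; first by exists tau.
exists #|V| => //.
have E : halts_at f e phi v tau = halts_at f e phi v #|V|.
  apply: (@transfer _ _ _ _ _ _ _ _ _ _ id id) => //=;
  rewrite ?(ball_eventually _ e v _ (ltnW Ht)) //.
by rewrite -E.
Qed.
End Gen.
Lemma modS n a : a < n -> a.+1 %% n = if a.+1 == n then 0 else a.+1.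
Proof.
move=> H; case: eqP => [->|NE]; first by rewrite modnn.
by rewrite modn_small //; lia.
Qed.

Lemma adjE n (x y : 'I_n) : cycle_adj n x y =
  [|| (y:nat) == x.+1, ((x.+1 == n) && (y == 0 :> nat)), (x:nat) == y.+1 | (y.+1 == n) && (x == 0 :> nat)].
Proof.
rewrite /cycle_adj !modS //.
have := ltn_ord x; have := ltn_ord y.
case Ex: (x.+1 == n); case Ey: (y.+1 == n); move: Ex Ey; simpl; lia.
Qed.

Lemma ball0 n (z : 'I_n) (hz : val z = 0) t :
  ball (cycle_adj n) z t = [set u : 'I_n | ((u:nat) <= t) || (n <= u + t)].
Proof.
elim: t => [|t IH].
  apply/setP => u; rewrite /= !inE -val_eqE hz.
  have := ltn_ord u; simpl; lia.
apply/setP => u; rewrite /= IH !inE.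
apply/idP/idP.
  case/orP => [|/existsP [w /andP [Hw Ha]]]; first by simpl; lia.
  move: Hw Ha; rewrite inE adjE; have := ltn_ord w; have := ltn_ord u; simpl.
  move: (nat_of_ord u) (nat_of_ord w) => a b; lia.
move=> Hu.
case: (boolP (((u:nat) <= t) || (n <= u + t))) => // Hn /=.
have Hu' := ltn_ord u.
case: (leqP (u : nat) t.+1) => Hut.
  have Ht : t < n by move: (nat_of_ord u) Hu Hn Hu' Hut => a; lia.
  apply/existsP; exists (Ordinal Ht); rewrite inE adjE /=.
  by move: (nat_of_ord u) Hu Hn Hu' Hut => a; lia.
have Hw : (if u.+1 == n then 0 else u.+1) < n by case: eqP; move: (nat_of_ord u) Hu' => a; lia.
apply/existsP; exists (Ordinal Hw); rewrite inE adjE /=.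
by case: eqP; move: (nat_of_ord u) Hu Hn Hu' Hut => a; lia.
Qed.

Lemma ball_hom (V1 V2 : finType) (e1 : rel V1) (e2 : rel V2) (g : V1 -> V2) :
  (forall x y, e1 x y -> e2 (g x) (g y)) ->
  forall v t x, x \in ball e1 v t -> g x \in ball e2 (g v) t.
Proof.
move=> Hg v; elim=> [|t IH] x /=; first by rewrite !in_set1 => /eqP ->.
rewrite !inE; case/orP => [/IH -> //|/existsP [w /andP [Hw Ha]]].
apply/orP; right; apply/existsP; exists (g w); rewrite IH //=; exact: Hg.
Qed.

Definition rotk n (k : nat) (i : 'I_n) : 'I_n :=
  Ordinal (ltn_pmod (i + k) (leq_ltn_trans (leq0n i) (ltn_ord i))).
Arguments rotk {n} k i.

Lemma rotk_adj n k (x y : 'I_n) : cycle_adj n (rotk k x) (rotk k y) = cycle_adj n x y.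
Proof.
rewrite /cycle_adj /=.
have Hn : 0 < n by apply: (leq_ltn_trans (leq0n x) (ltn_ord x)).
have E (a b : 'I_n) : ((b + k) %% n == ((a + k) %% n).+1 %% n) = (val b == a.+1 %% n).
  rewrite -addn1 modnDml addnAC eqn_modDr.
  by rewrite [X in X == _]modn_small ?addn1.
by rewrite !E.
Qed.

Lemma rotk_inv n (v : 'I_n) (i : 'I_n) : rotk (n - v) (rotk v i) = i.
Proof.
apply: val_inj => /=.
rewrite modnDml -addnA subnKC ?(ltnW (ltn_ord v)) //.
by rewrite modnDr modn_small.
Qed.

Lemma rotk_inv' n (v : 'I_n) (i : 'I_n) : rotk v (rotk (n - v) i) = i.
Proof.
apply: val_inj => /=.
rewrite modnDml -addnA subnK ?(ltnW (ltn_ord v)) //.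
by rewrite modnDr modn_small.
Qed.

Section Cyc.
Variables (S : Type) (f : local_rule S) (finv : iso_invariant f).

Lemma rotk_z n (Hn : 0 < n) (v : 'I_n) : rotk v (Ordinal Hn) = v.
Proof. by apply: val_inj => /=; rewrite add0n modn_small. Qed.

Lemma rot_transfer n (Hn : 0 < n) phi (v : 'I_n) tau :
  halts_at f (cycle_adj n) (fun i => phi (rotk v i)) (Ordinal Hn) tau =
  halts_at f (cycle_adj n) phi v tau.
Proof.
apply: (@transfer _ f finv _ _ _ _ _ _ _ _ _ _ (rotk v) (rotk (n - v))).
- move=> x Hx.
  have := @ball_hom _ _ (cycle_adj n) (cycle_adj n) (rotk v) _ _ tau x Hx.
  by rewrite rotk_z; apply => a b; rewrite rotk_adj.
- move=> y Hy.
  have := @ball_hom _ _ (cycle_adj n) (cycle_adj n) (rotk (n - v)) _ _ tau y Hy.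
  have -> : rotk (n - v) v = Ordinal Hn by rewrite -{2}(rotk_z _ Hn v) rotk_inv.
  by apply => a b; rewrite rotk_adj.
- by move=> x _; rewrite rotk_inv.
- by move=> y _; rewrite rotk_inv'.
- by move=> x y _ _; rewrite rotk_adj.
- by [].
- exact: rotk_z.
Qed.

Definition gm n m t (d0 : 'I_m) (i : 'I_n) : 'I_m :=
  insubd d0 (if (i:nat) <= t then val i else i + m - n).
Arguments gm {n m} t d0 i.

Lemma gmE n m t (d0 : 'I_m) (i : 'I_n) : ((i:nat) <= t -> i < m) ->
  nat_of_ord (gm t d0 i) = if (i:nat) <= t then (i:nat) else i + m - n.
Proof.
move=> H; rewrite /gm insubdK //= unfold_in /=.
have := ltn_ord i; have := ltn_ord d0; case: (leqP (nat_of_ord i) t) => Hi; last by lia.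
by move: (H Hi); lia.
Qed.

Ltac genord := repeat match goal with |- context [nat_of_ord ?x] =>
  let H := fresh in have H := ltn_ord x; move: H; move: (nat_of_ord x) => ? end.
Ltac splitif := match goal with |- context [if ?b then _ else _] =>
  let E := fresh in case E: b; move: E end.
Ltac crunch := genord; repeat splitif; lia.

Lemma cyc_transfer n m t (Hn : 0 < n) (Hm : 0 < m) (Hn2 : 2 * t + 2 <= n) (Hm2 : 2 * t + 2 <= m)
  tau (Ht : tau <= t) phi :
  halts_at f (cycle_adj n) (fun i => phi (gm t (Ordinal Hm) i)) (Ordinal Hn) tau =
  halts_at f (cycle_adj m) phi (Ordinal Hm) tau.
Proof.
apply: (@transfer _ f finv _ _ _ _ _ _ _ _ _ _ (gm t (Ordinal Hm)) (gm t (Ordinal Hn)));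
  rewrite ?ball0 //.
- move=> x; rewrite !inE gmE; last by crunch.
  crunch.
- move=> x; rewrite !inE gmE; last by crunch.
  crunch.
- move=> x; rewrite !inE => Hx; apply: val_inj => /=; move: Hx.
  rewrite gmE; last by rewrite gmE; crunch.
  rewrite gmE; last by crunch.
  crunch.
- move=> x; rewrite !inE => Hx; apply: val_inj => /=; move: Hx.
  rewrite gmE; last by rewrite gmE; crunch.
  rewrite gmE; last by crunch.
  crunch.
- move=> x y; rewrite !inE !adjE.
  rewrite !gmE; try by crunch.
- apply: val_inj => /=; rewrite gmE //=.
Qed.

Lemma propagate n m t (Hn3 : 3 <= n) (Hm3 : 3 <= m) (Hn2 : 2 * t + 2 <= n) (Hm2 : 2 * t + 2 <= m) :
  halts_within f (cycle_adj n) t -> halts_within f (cycle_adj m) t.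
Proof.
move=> H phi v.
have Hn : 0 < n by lia.
have Hm : 0 < m by lia.
have [tau Ht Hh] := H (fun i => phi (rotk v (gm t (Ordinal Hm) i))) (Ordinal Hn).
exists tau => //.
rewrite -(@rot_transfer _ Hm phi v tau) -(@cyc_transfer n m t Hn Hm Hn2 Hm2 tau Ht).
exact: Hh.
Qed.
End Cyc.

Theorem proposition4 (S : Type) (f : local_rule S) (finv : iso_invariant f)
  (halts : forall n, 3 <= n -> forall (phi : 'I_n -> S) (v : 'I_n),
             exists tau, halts_at f (cycle_adj n) phi v tau)
  (unbounded : forall M, exists2 n, 3 <= n & ~ halts_within f (cycle_adj n) M) :
  exists d N, 0 < d /\
    forall n, N <= n -> forall t, halts_within f (cycle_adj n) t -> n <= d * t.
Proof.
exists 4, 3; split => // n Hn3 t Ht.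
rewrite leqNgt; apply/negP => Hlt.
have Hn2 : 2 * t + 2 <= n by lia.
have [m Hm3 Hnot] := unbounded (2 * t + 2); apply: Hnot.
case: (leqP (2 * t + 2) m) => Hm.
  move=> phi v; have [tau H1 H2] := @propagate _ f finv n m t Hn3 Hm3 Hn2 Hm Ht phi v.
  by exists tau => //; lia.
move=> phi v; have [tau Htau] := halts m Hm3 phi v.
have [tau' H1 H2] := @small_bound _ f finv _ _ _ _ _ Htau.
by exists tau' => //; move: H1; rewrite card_ord; lia.
Qed.
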